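(* Let $Q$ be a finite closed down set of pairs with parameters $p,q,k$, $I_0,\dots,I_{k-1}$, $II_1,\dots,II_k$ as described in the context. Then $$\sum_{j=1}^k II_j=p\qquad\text{and}\qquad \sum_{j=0}^{k-1}I_j=q-p.$$
   Context: Let $c_1,c_2,\dots$ and $s_1,s_2,\dots$ be distinct vertices, and let $Q$ be a finite set of pairs $c_as_b$ that is closed down: $c_as_b\in Q$ implies $c_{a'}s_{b'}\in Q$ for all $a'\le a$, $b'\le b$. Write $[i]\times[j]=\{c_as_b:a\le i,b\le j\}$, and let $\nu(\ell,Q)$ be the matching number of the bipartite graph with sides $\{c_1,\dots,c_\ell\},\{s_1,\dots,s_\ell\}$ and edge set $([\ell]\times[\ell])\setminus Q$. Let $p\ge0$ be the largest integer with $[p]\times[p]\subseteq Q$, and $q\ge0$ the least integer such that $\nu(\ell,Q)=\ell$ for all $\ell\ge p+q$. For every $\ell>p$ one has $\nu(\ell,Q)-\nu(\ell-1,Q)\in\{1,2\}$. The integer interval $(p,p+q]$ is divided, in increasing order, into consecutive left-open right-closed integer intervals $\mathcal O_0,\mathcal T_1,\mathcal O_1,\dots,\mathcal O_{k-1},\mathcal T_k$ such that the increment $\nu(\ell,Q)-\nu(\ell-1,Q)$ is $1$ for $\ell$ in each $\mathcal O_j$ and $2$ for $\ell$ in each $\mathcal T_j$; all intervals except possibly $\mathcal O_0$ are nonempty and the last one is $\mathcal T_k$. Set $I_j=|\mathcal O_j|$ and $II_j=|\mathcal T_j|$. *)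

(* Defs.v *)
From mathcomp Require Import all_boot all_order.
Set Implicit Arguments. Unset Strict Implicit. Unset Printing Implicit Defensive.

(* Q is a finite set of pairs (a,b), standing for c_a s_b, with a,b >= 1. *)

Definition closed_down (Q : seq (nat * nat)) : Prop :=
  forall a b a' b', (a, b) \in Q -> 1 <= a' <= a -> 1 <= b' <= b -> (a', b') \in Q.

Definition box_sub (i j : nat) (Q : seq (nat * nat)) : Prop :=
  forall a b, 1 <= a <= i -> 1 <= b <= j -> (a, b) \in Q.

(* bipartite graph on {c_1..c_l},{s_1..s_l}; vertex index i : 'I_l stands
   for c_(i+1) (resp. s_(i+1)); edge set ([l]x[l]) \ Q *)
Definition edgeQ (Q : seq (nat * nat)) (l : nat) (e : 'I_l * 'I_l) : bool :=
  (e.1.+1, e.2.+1) \notin Q.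

Definition is_matching (Q : seq (nat * nat)) (l : nat) (M : {set 'I_l * 'I_l}) : bool :=
  [forall e in M, edgeQ Q e] &&
  [forall e in M, forall f in M, (e != f) ==> ((e.1 != f.1) && (e.2 != f.2))].

Definition nu (Q : seq (nat * nat)) (l : nat) : nat :=
  \max_(M : {set 'I_l * 'I_l} | is_matching Q M) #|M|.

(* Main.v *)
Require Import Defs.
From mathcomp Require Import all_boot all_order.
From mathcomp Require Import zify.

Lemma tele (f : nat -> nat) m n :
  all (fun x => 0 < x) [seq f l - f l.-1 | l <- iota n.+1 m] ->
  f (n + m) = f n + sumn [seq f l - f l.-1 | l <- iota n.+1 m].
Proof.
elim: m n => [|m IH] n /=; first by rewrite addn0 addn0.
case/andP=> H1 H2; have := IH _ H2; rewrite addSnnS => ->; lia.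
Qed.

Lemma flat_facts (I II : nat -> nat) k :
  let F := flatten [seq nseq (I j) 1 ++ nseq (II j.+1) 2 | j <- iota 0 k] in
  [/\ sumn F = \sum_(0 <= j < k) I j + 2 * \sum_(0 <= j < k) II j.+1,
      size F = \sum_(0 <= j < k) I j + \sum_(0 <= j < k) II j.+1 &
      all (fun x => 0 < x) F].
Proof.
elim: k => [|k [IH1 IH2 IH3]]; first by rewrite !big_geq.
cbv zeta; have -> : iota 0 k.+1 = iota 0 k ++ [:: k] by rewrite -addn1 iotaD.
rewrite map_cat flatten_cat /= cats0 sumn_cat size_cat all_cat.
rewrite IH1 IH2 IH3 !big_nat_recr //= sumn_cat !sumn_nseq size_cat !size_nseq.
rewrite all_cat; split; [lia|lia|].
by apply/andP; split; apply/allP=> x /nseqP [-> _].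
Qed.

Lemma nu_box (Q : seq (nat * nat)) p : box_sub p p Q -> nu Q p = 0.
Proof.
move=> Hb; rewrite /nu; apply/eqP; rewrite -leqn0; apply/bigmax_leqP => M.
case/andP=> /forallP H _; rewrite leqn0 cards_eq0; apply/eqP/setP=> e.
rewrite inE; apply/negP=> He; have := H e; rewrite He /= /edgeQ.
by rewrite Hb //= ltn_ord.
Qed.

Theorem corollary3 (Q : seq (nat * nat)) (p q k : nat) (I II : nat -> nat) :
  (forall a b, (a, b) \in Q -> (0 < a) && (0 < b)) ->
  closed_down Q ->
  (* p is the largest integer with [p]x[p] in Q *)
  box_sub p p Q -> (forall p', box_sub p' p' Q -> p' <= p) ->
  (* q is the least integer with nu(l,Q) = l for all l >= p+q *)
  (forall l, p + q <= l -> nu Q l = l) ->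
  (forall q', (forall l, p + q' <= l -> nu Q l = l) -> q <= q') ->
  (* decomposition of (p,p+q] into O_0,T_1,O_1,...,O_(k-1),T_k with
     |O_j| = I j, |T_j| = II j *)
  [seq nu Q l - nu Q l.-1 | l <- iota p.+1 q] =
    flatten [seq nseq (I j) 1 ++ nseq (II j.+1) 2 | j <- iota 0 k] ->
  (forall j, 1 <= j < k -> 0 < I j) ->
  (forall j, 1 <= j <= k -> 0 < II j) ->
  \sum_(1 <= j < k.+1) II j = p /\ \sum_(0 <= j < k) I j = q - p.
Proof.
move=> _ _ Hb _ Hq _ Hs _ _.
have [F1 F2 F3] := flat_facts I II k.
have Hsz : size [seq nu Q l - nu Q l.-1 | l <- iota p.+1 q] = q.
  by rewrite size_map size_iota.
rewrite Hs in Hsz.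
have Ht := tele (nu Q) q p; rewrite Hs in Ht; have := Ht F3.
rewrite Hq // nu_box // F1 => E.
rewrite big_add1 /=.
lia.
Qed.
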